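(* Let $G$ be a finite simple graph and $vw$ an edge of $G$. Then $vw$ is exposed in $G$ if and only if $N_G(v)\cap N_G(w)$ is nonempty and induces a clique (complete subgraph) in $G$.
   Context: All graphs are finite, undirected, simple. $N_G(v)=\{w : vw\in E(G)\}$ is the open neighborhood. A facet edge of $G$ is an edge $xy$ such that $\{x,y\}$ is a maximal clique of $G$. An edge of $G$ is exposed if it is contained in a unique maximal clique of $G$ and it is not a facet edge. *)

(* Defs.v *)
From mathcomp Require Import all_boot.
Set Implicit Arguments. Unset Strict Implicit. Unset Printing Implicit Defensive.

Definition simple_graph (T : finType) (e : rel T) : Prop :=
  symmetric e /\ irreflexive e.

Definition nbhd (T : finType) (e : rel T) (v : T) : {set T} := [set w | e v w].

Definition is_clique (T : finType) (e : rel T) (K : {set T}) : bool :=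
  [forall x in K, forall y in K, (x != y) ==> e x y].

Definition is_max_clique (T : finType) (e : rel T) (K : {set T}) : bool :=
  is_clique e K && [forall K' : {set T}, (is_clique e K' && (K \subset K')) ==> (K' == K)].

Definition facet_edge (T : finType) (e : rel T) (x y : T) : Prop :=
  e x y /\ is_max_clique e [set x; y].

Definition exposed_edge (T : finType) (e : rel T) (x y : T) : Prop :=
  e x y /\
  (exists! K : {set T}, is_max_clique e K /\ [set x; y] \subset K) /\
  ~ facet_edge e x y.

(* Main.v *)
Require Import Defs.
From mathcomp Require Import all_boot.

Lemma cliqueP (T : finType) (e : rel T) (K : {set T}) :
  reflect (forall x y, x \in K -> y \in K -> x != y -> e x y) (is_clique e K).
Proof.
apply: (iffP forallP) => [H x y xK yK nxy | H x].
  by have := H x; rewrite xK /= => /forall_inP/(_ y yK)/implyP; apply.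
by apply/implyP => xK; apply/forall_inP => y yK; apply/implyP; apply: H.
Qed.

Lemma ext_max (T : finType) (e : rel T) (K0 : {set T}) :
  is_clique e K0 -> exists K, is_max_clique e K /\ K0 \subset K.
Proof.
move=> cK0.
have P0 : [pred K : {set T} | is_clique e K && (K0 \subset K)] K0 by rewrite /= cK0 subxx.
case: (@arg_maxnP _ K0 [pred K : {set T} | is_clique e K && (K0 \subset K)] (fun K : {set T} => #|K|) P0) => K /andP[cK sK] Hmax.
exists K; split=> //; rewrite /is_max_clique cK /=.
apply/forallP => K'; apply/implyP => /andP[cK' sKK'].
have := Hmax K'; rewrite /= cK' (subset_trans sK sKK') => /(_ isT) le.
by rewrite eq_sym eqEcard sKK' le.
Qed.

Theorem lemma2p7 (T : finType) (e : rel T) (v w : T) :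
  simple_graph e -> e v w ->
  (exposed_edge e v w <->
   (nbhd e v :&: nbhd e w != set0 /\ is_clique e (nbhd e v :&: nbhd e w))).
Proof.
move=> [sym irr] evw.
set C := nbhd e v :&: nbhd e w.
have inC x : (x \in C) = e v x && e w x by rewrite !inE.
have nvw : v != w by apply/eqP => E; move: evw; rewrite E irr.
have cvw : is_clique e [set v; w].
  apply/cliqueP => x y; rewrite !inE => /orP[]/eqP-> /orP[]/eqP->;
    rewrite ?eqxx // => _; by rewrite sym.
have sub K : is_clique e K -> [set v; w] \subset K -> K \subset [set v; w] :|: C.
  move=> /cliqueP cK /subsetP svw; apply/subsetP => x xK.
  have vK : v \in K by apply: svw; rewrite !inE eqxx.
  have wK : w \in K by apply: svw; rewrite !inE eqxx orbT.
  rewrite !inE; case: (eqVneq x v) => //= xv; case: (eqVneq x w) => //= xw.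
  by rewrite (cK _ _ vK xK) ?(cK _ _ wK xK) // eq_sym.
split.
- move=> [_ [[K0 [[mK0 sK0] uK0]] nf]].
  have nC : C != set0.
    apply/negP => /eqP C0; apply: nf; split=> //.
    rewrite /is_max_clique cvw /=; apply/forallP => K'; apply/implyP => /andP[cK' s].
    have := sub K' cK' s; rewrite C0 setU0 => H.
    by rewrite eqEsubset H.
  split=> //; apply/cliqueP => x y; rewrite !inC => /andP[vx wx] /andP[vy wy] nxy.
  apply/negPn/negP => nexy.
  have cl z : e v z -> e w z -> is_clique e [set v; w; z].
    move=> vz wz; apply/cliqueP => a b; rewrite !inE.
    move=> /orP[/orP[]|]/eqP-> /orP[/orP[]|]/eqP->; rewrite ?eqxx // => _;
      by rewrite // sym.
  have [Kx [mKx sKx]] := @ext_max _ e _ (cl x vx wx).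
  have [Ky [mKy sKy]] := @ext_max _ e _ (cl y vy wy).
  have sub3 z (K : {set T}) : [set v; w; z] \subset K -> [set v; w] \subset K.
    by apply: subset_trans; apply/subsetP => a; rewrite !inE => ->.
  have Ex := uK0 Kx (conj mKx (sub3 _ _ sKx)).
  have Ey := uK0 Ky (conj mKy (sub3 _ _ sKy)).
  have xK : x \in K0 by rewrite Ex; apply: (subsetP sKx); rewrite !inE eqxx orbT.
  have yK : y \in K0 by rewrite Ey; apply: (subsetP sKy); rewrite !inE eqxx orbT.
  move: mK0 => /andP[/cliqueP cK0 _].
  by move: nexy; rewrite cK0.
- move=> [nC cC].
  set K0 := [set v; w] :|: C.
  have cK0 : is_clique e K0.
    apply/cliqueP => x y; rewrite !inE ?inC -?orbA.
    move=> /or3P[/eqP->|/eqP->|/andP[vx wx]] /or3P[/eqP->|/eqP->|/andP[vy wy]];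
      rewrite ?eqxx // => nxy; rewrite ?(sym w) //; try by rewrite sym.
    move/cliqueP: cC => H; apply: H => //; by rewrite inC; apply/andP.
  have sK0 : [set v; w] \subset K0 by apply: subsetUl.
  have mK0 : is_max_clique e K0.
    rewrite /is_max_clique cK0 /=; apply/forallP => K'; apply/implyP => /andP[cK' s].
    by rewrite eqEsubset s andbT sub // (subset_trans sK0 s).
  split=> //; split.
    exists K0; split=> // K [mK sK]; move: mK => /andP[cK /forallP/(_ K0)].
    by rewrite /= cK0 (sub K cK sK) => /eqP.
  move=> [_ /andP[_ /forallP/(_ K0)]]; rewrite /= cK0 sK0 /= => /eqP E.
  case/set0Pn: nC => u uC.
  have : u \in [set v; w] by rewrite -E inE uC orbT.
  move: uC; rewrite inC !inE => /andP[vu wu] /orP[]/eqP Eu; move: vu wu;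
    by rewrite Eu irr ?andbF.
Qed.
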